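(* Let $T\ge1$ be an integer and assume $\psi_{A,a}>\psi_{A,b}$ and $\psi_{B,b}>\psi_{B,a}$. Then the point $(\theta_{A,a},\theta_{B,a})=(0,1)$ (i.e., $\theta_{A,b}=1$ and $\theta_{B,a}=1$: every user of each group is initially shown the article of the other group) is not a maximizer of $$J(\theta_{A,a},\theta_{B,a})=\sum_{t=1}^T\sum_{g\in\{A,B\}}\sum_{s\in\{a,b\}} l_{g,s}(t,\theta)$$ over $[0,1]^2$, where $\theta_{A,b}=1-\theta_{A,a}$ and $\theta_{B,b}=1-\theta_{B,a}$.
   Context: Groups are $g\in\{A,B\}$; for a group $g$, $g'$ denotes the other group. Articles are $s\in\{a,b\}$. Parameters: $\pi_A=\pi\in(0,1)$, $\pi_B=1-\pi$; $q_A,q_B\in(\tfrac12,1)$; for each $g,s$ a real number $\psi_{g,s}\in(0,1)$. For fixed $s$, given $\theta_{A,s},\theta_{B,s}\in[0,1]$, the mass function is defined recursively for both groups by $l_{g,s}(1,\theta)=\pi_g\theta_{g,s}\psi_{g,s}$ and $l_{g,s}(t+1,\theta)=\psi_{g,s}\big(q_g l_{g,s}(t,\theta)+(1-q_{g'})l_{g',s}(t,\theta)\big)$ for $t\ge1$. *)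

(* Defs.v *)
From Stdlib Require Import Reals.
Open Scope R_scope.

Inductive group := GA | GB.
Inductive article := Sa | Sb.

Definition other (g : group) : group := match g with GA => GB | GB => GA end.

Definition pig (pi : R) (g : group) : R := match g with GA => pi | GB => 1 - pi end.

(* l_{g,s}(t, theta); defined for t >= 1 (value at t = 0 is an unused dummy 0). *)
Fixpoint lmass (pi : R) (q : group -> R) (psi th : group -> article -> R)
    (s : article) (t : nat) (g : group) {struct t} : R :=
  match t with
  | O => 0
  | S O => pig pi g * th g s * psi g s
  | S ((S _) as t') =>
      psi g s * (q g * lmass pi q psi th s t' g
                 + (1 - q (other g)) * lmass pi q psi th s t' (other g))
  end.

Definition theta_of (x y : R) (g : group) (s : article) : R :=
  match g, s with
  | GA, Sa => x | GA, Sb => 1 - x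
  | GB, Sa => y | GB, Sb => 1 - y
  end.

Definition stage (pi : R) (q : group -> R) (psi th : group -> article -> R) (t : nat) : R :=
  lmass pi q psi th Sa t GA + lmass pi q psi th Sb t GA
  + lmass pi q psi th Sa t GB + lmass pi q psi th Sb t GB.

Fixpoint sumT (f : nat -> R) (T : nat) : R :=
  match T with O => 0 | S T' => sumT f T' + f (S T') end.

Definition J (pi : R) (q : group -> R) (psi : group -> article -> R) (T : nat) (x y : R) : R :=
  sumT (stage pi q psi (theta_of x y)) T.

(* Main.v *)
Require Import Defs.
From Stdlib Require Import Reals Lra Lia Psatz.
Open Scope R_scope.

Section Aux.
Variable q : group -> R.
Variable psi : group -> article -> R.

Fixpoint F (p : group -> R) (s : article) (t : nat) (g : group) {struct t} : R :=
  match t with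
  | O => 0
  | S O => p g * psi g s
  | S ((S _) as t') =>
      psi g s * (q g * F p s t' g + (1 - q (other g)) * F p s t' (other g))
  end.

Definition step (p : group -> R) (s : article) (g : group) : R :=
  q g * p g * psi g s + (1 - q (other g)) * p (other g) * psi (other g) s.

Fixpoint V (s : article) (t : nat) (g : group) {struct t} : R :=
  match t with
  | O => 0
  | S t' => psi g s * (1 + q g * V s t' g + (1 - q g) * V s t' (other g))
  end.

Lemma lmass_F pi th s t g :
  lmass pi q psi th s t g = F (fun g => pig pi g * th g s) s t g.
Proof.
  revert g; induction t as [|t IH]; intro g; [reflexivity|].
  destruct t; [reflexivity|].
  change (psi g s * (q g * lmass pi q psi th s (S t) g
            + (1 - q (other g)) * lmass pi q psi th s (S t) (other g)) =
          psi g s * (q g * F (fun g => pig pi g * th g s) s (S t) g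
            + (1 - q (other g)) * F (fun g => pig pi g * th g s) s (S t) (other g))).
  rewrite !IH; reflexivity.
Qed.

Lemma F_shift p s k g : (1 <= k)%nat -> F p s (S k) g = F (step p s) s k g.
Proof.
  intro Hk; revert g; induction k as [|k IH]; intro g; [lia|].
  destruct k.
  - simpl. unfold step. destruct g; simpl; ring.
  - change (psi g s * (q g * F p s (S (S k)) g
            + (1 - q (other g)) * F p s (S (S k)) (other g)) =
           psi g s * (q g * F (step p s) s (S k) g
            + (1 - q (other g)) * F (step p s) s (S k) (other g))).
    rewrite !IH by lia; reflexivity.
Qed.

Lemma sumT_ext f h t : (forall k, (1 <= k <= t)%nat -> f k = h k) -> sumT f t = sumT h t.
Proof.
  induction t; intro H; simpl; [reflexivity|].
  rewrite IHt by (intros; apply H; lia). rewrite H by lia. reflexivity.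
Qed.

Lemma sumT_shift f t : sumT f (S t) = f 1%nat + sumT (fun k => f (S k)) t.
Proof.
  induction t; simpl in *; [ring|]. rewrite IHt. ring.
Qed.

Lemma sumT_plus f h t : sumT (fun k => f k + h k) t = sumT f t + sumT h t.
Proof. induction t; simpl; [ring|]. rewrite IHt; ring. Qed.

Lemma sum_F_V s t : forall p,
  sumT (fun k => F p s k GA + F p s k GB) t = p GA * V s t GA + p GB * V s t GB.
Proof.
  induction t as [|t IH]; intro p; [simpl; ring|].
  rewrite sumT_shift.
  rewrite (sumT_ext _ (fun k => F (step p s) s k GA + F (step p s) s k GB)).
  2:{ intros k Hk. rewrite !F_shift by lia. reflexivity. }
  rewrite IH. unfold step; simpl. ring.
Qed.

End Aux.


Definition stp (x y qa qb : R) (p : R * R) : R * R :=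
  (x * (1 + qa * fst p + (1 - qa) * snd p), y * (1 + (1 - qb) * fst p + qb * snd p)).
Fixpoint Vp x y qa qb (t : nat) : R * R :=
  match t with O => (0, 0) | S t => stp x y qa qb (Vp x y qa qb t) end.

Lemma Vp_swap x y qa qb t : Vp y x qb qa t = (snd (Vp x y qa qb t), fst (Vp x y qa qb t)).
Proof.
  induction t; simpl; [reflexivity|]. rewrite IHt. unfold stp; simpl. f_equal; ring.
Qed.

Section X.
Variables (x1 x2 y qa qb : R).
Hypotheses (Hqa : 0 <= qa <= 1) (Hqb : 0 <= qb <= 1) (Hx : 0 <= x2 < x1) (Hy : 0 <= y < 1).

Definition P1 t := Vp x1 y qa qb t.
Definition P2 t := Vp x2 y qa qb t.
Definition u t := fst (P1 t) - fst (P2 t).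
Definition w t := snd (P1 t) - snd (P2 t).

Definition Inv t :=
  0 <= fst (P1 t) <= fst (P1 (S t)) /\ 0 <= snd (P1 t) <= snd (P1 (S t)) /\
  0 <= w t <= u t /\ u t <= u (S t) /\ w t <= w (S t).

Lemma inv_all t : Inv t.
Proof.
  induction t as [|t IH].
  - unfold Inv, u, w, P1, P2; simpl; lra.
  - unfold Inv, u, w, P1, P2 in *. simpl in *.
    destruct (Vp x1 y qa qb t) as [a1 b1]; destruct (Vp x2 y qa qb t) as [a2 b2].
    unfold stp in *; simpl in *.
    set (a1' := x1 * (1 + qa * a1 + (1 - qa) * b1)) in *.
    set (b1' := y * (1 + (1 - qb) * a1 + qb * b1)) in *.
    set (a2' := x2 * (1 + qa * a2 + (1 - qa) * b2)) in *.
    set (b2' := y * (1 + (1 - qb) * a2 + qb * b2)) in *.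
    destruct IH as [[Ha0 Ha] [[Hb0 Hb] [[Hw0 Hwu] [Hu Hw]]]].
    assert (E1 : x1 * (1 + qa * a1' + (1 - qa) * b1') - a1' =
                 x1 * (qa * (a1' - a1) + (1 - qa) * (b1' - b1))) by (unfold a1'; ring).
    assert (E2 : y * (1 + (1 - qb) * a1' + qb * b1') - b1' =
                 y * ((1 - qb) * (a1' - a1) + qb * (b1' - b1))) by (unfold b1'; ring).
    assert (E3 : (x1 * (1 + qa * a1' + (1 - qa) * b1') - x2 * (1 + qa * a2' + (1 - qa) * b2'))
                 - (a1' - a2') =
                 (x1 - x2) * (qa * (a1' - a1) + (1 - qa) * (b1' - b1))
                 + x2 * (qa * ((a1' - a2') - (a1 - a2)) + (1 - qa) * ((b1' - b2') - (b1 - b2))))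
      by (unfold a1', a2', b1', b2'; ring).
    assert (E4 : (y * (1 + (1 - qb) * a1' + qb * b1') - y * (1 + (1 - qb) * a2' + qb * b2'))
                 - (b1' - b2') =
                 y * ((1 - qb) * ((a1' - a2') - (a1 - a2)) + qb * ((b1' - b2') - (b1 - b2))))
      by (unfold a1', a2', b1', b2'; ring).
    assert (E5 : b1' - b2' = y * ((1 - qb) * (a1 - a2) + qb * (b1 - b2))) by (unfold b1', b2'; ring).
    assert (A0 : 0 <= a1') by (unfold a1'; apply Rmult_le_pos; nra).
    assert (B0 : 0 <= b1') by (unfold b1'; apply Rmult_le_pos; nra).
    assert (F1 : 0 <= qa * (a1' - a1) + (1 - qa) * (b1' - b1)) by nra.
    assert (F2 : 0 <= (1 - qb) * (a1' - a1) + qb * (b1' - b1)) by nra.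
    assert (F3 : 0 <= qa * ((a1' - a2') - (a1 - a2)) + (1 - qa) * ((b1' - b2') - (b1 - b2))) by nra.
    assert (F4 : 0 <= (1 - qb) * ((a1' - a2') - (a1 - a2)) + qb * ((b1' - b2') - (b1 - b2))) by nra.
    assert (F5 : 0 <= (1 - qb) * (a1 - a2) + qb * (b1 - b2) <= a1 - a2) by nra.
    split; [split; [nra|nra]|].
    split; [split; [nra|nra]|].
    split; [split; [nra|nra]|].
    split; [nra|nra].
Qed.

Lemma strict t : u (S t) > w (S t).
Proof.
  pose proof (inv_all t) as [[Ha0 Ha] [[Hb0 Hb] [[Hw0 Hwu] [Hu Hw]]]].
  unfold u, w, P1, P2 in *. simpl in *.
  destruct (Vp x1 y qa qb t) as [a1 b1]; destruct (Vp x2 y qa qb t) as [a2 b2].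
  unfold stp in *; simpl in *.
  assert (E : x1 * (1 + qa * a1 + (1 - qa) * b1) - x2 * (1 + qa * a2 + (1 - qa) * b2)
     = (x1 - x2) * (1 + qa * a1 + (1 - qa) * b1) + x2 * (qa * (a1 - a2) + (1 - qa) * (b1 - b2))) by ring.
  assert (E' : y * (1 + (1 - qb) * a1 + qb * b1) - y * (1 + (1 - qb) * a2 + qb * b2)
     = y * ((1 - qb) * (a1 - a2) + qb * (b1 - b2))) by ring.
  rewrite E, E' in *.
  assert (G0 : 0 <= qa * a1 + (1 - qa) * b1) by nra.
  assert (G1 : (x1 - x2) <= (x1 - x2) * (1 + qa * a1 + (1 - qa) * b1)).
  { assert (0 <= (x1 - x2) * (qa * a1 + (1 - qa) * b1)) by (apply Rmult_le_pos; lra). nra. }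
  assert (G2 : 0 <= x2 * (qa * (a1 - a2) + (1 - qa) * (b1 - b2))) by (apply Rmult_le_pos; nra).
  assert (G3 : y * ((1 - qb) * (a1 - a2) + qb * (b1 - b2)) <= y * (a1 - a2)).
  { apply Rmult_le_compat_l; nra. }
  destruct (Req_dec (a1 - a2) 0) as [Z|Z].
  - assert (y * (a1 - a2) = 0) by (rewrite Z; ring). unfold Rgt. lra.
  - assert (y * (a1 - a2) < a1 - a2) by nra. unfold Rgt. lra.
Qed.
End X.

Lemma V_Vp q psi s t :
  V q psi s t GA = fst (Vp (psi GA s) (psi GB s) (q GA) (q GB) t) /\
  V q psi s t GB = snd (Vp (psi GA s) (psi GB s) (q GA) (q GB) t).
Proof.
  induction t as [|t [IA IB]]; simpl; [split; reflexivity|].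
  unfold stp; simpl. rewrite IA, IB. split; ring.
Qed.

Definition fd x y qa qb t := fst (Vp x y qa qb t) - snd (Vp x y qa qb t).

Lemma fd_x x1 x2 y qa qb t : 0 <= qa <= 1 -> 0 <= qb <= 1 -> 0 <= x2 < x1 -> 0 <= y < 1 ->
  fd x1 y qa qb (S t) > fd x2 y qa qb (S t).
Proof.
  intros. pose proof (strict x1 x2 y qa qb H H0 H1 H2 t) as HS.
  unfold u, w, P1, P2 in HS. unfold fd.
  revert HS. generalize (Vp x1 y qa qb (S t)) (Vp x2 y qa qb (S t)).
  intros [a b] [c d]; simpl. unfold Rgt. intro; lra.
Qed.

Lemma fd_y x y1 y2 qa qb t : 0 <= qa <= 1 -> 0 <= qb <= 1 -> 0 <= y2 < y1 -> 0 <= x < 1 ->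
  fd x y1 qa qb (S t) < fd x y2 qa qb (S t).
Proof.
  intros. pose proof (strict y1 y2 x qb qa H0 H H1 H2 t) as HS.
  unfold u, w, P1, P2 in HS. rewrite (Vp_swap x y1 qa qb (S t)), (Vp_swap x y2 qa qb (S t)) in HS. unfold fd.
  revert HS. generalize (Vp x y1 qa qb (S t)) (Vp x y2 qa qb (S t)).
  intros [a b] [c d]; simpl. unfold Rgt. intro; lra.
Qed.

Lemma J_formula pi q psi T x y :
  J pi q psi T x y =
    pi * x * V q psi Sa T GA + (1 - pi) * y * V q psi Sa T GB
  + pi * (1 - x) * V q psi Sb T GA + (1 - pi) * (1 - y) * V q psi Sb T GB.
Proof.
  unfold J, stage.
  rewrite (sumT_ext _ (fun k =>
     (F q psi (fun g => pig pi g * theta_of x y g Sa) Sa k GA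
      + F q psi (fun g => pig pi g * theta_of x y g Sa) Sa k GB)
   + (F q psi (fun g => pig pi g * theta_of x y g Sb) Sb k GA
      + F q psi (fun g => pig pi g * theta_of x y g Sb) Sb k GB))).
  2:{ intros k _. rewrite !lmass_F. ring. }
  rewrite sumT_plus, !sum_F_V. simpl. ring.
Qed.

Theorem corollary1 (pi : R) (q : group -> R) (psi : group -> article -> R) (T : nat) :
  0 < pi < 1 ->
  (forall g, 1/2 < q g < 1) ->
  (forall g s, 0 < psi g s < 1) ->
  (1 <= T)%nat ->
  psi GA Sa > psi GA Sb ->
  psi GB Sb > psi GB Sa ->
  ~ (forall x y, 0 <= x <= 1 -> 0 <= y <= 1 -> J pi q psi T x y <= J pi q psi T 0 1).
Proof.
  intros Hpi Hq Hpsi HT HA HB H.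
  destruct T as [|t]; [lia|].
  pose proof (Hq GA); pose proof (Hq GB).
  pose proof (Hpsi GA Sa); pose proof (Hpsi GA Sb); pose proof (Hpsi GB Sa); pose proof (Hpsi GB Sb).
  pose proof (fd_x (psi GA Sa) (psi GA Sb) (psi GB Sb) (q GA) (q GB) t ltac:(lra) ltac:(lra) ltac:(unfold Rgt in *; lra) ltac:(lra)) as X1.
  pose proof (fd_y (psi GA Sa) (psi GB Sb) (psi GB Sa) (q GA) (q GB) t ltac:(lra) ltac:(lra) ltac:(unfold Rgt in *; lra) ltac:(lra)) as X2.
  pose proof (V_Vp q psi Sa (S t)) as [VaA VaB].
  pose proof (V_Vp q psi Sb (S t)) as [VbA VbB].
  unfold fd in X1, X2. rewrite <- VaA, <- VaB, <- VbA, <- VbB in *.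
  pose proof (H 1 1 ltac:(lra) ltac:(lra)) as K1.
  pose proof (H 0 0 ltac:(lra) ltac:(lra)) as K2.
  rewrite !J_formula in K1, K2.
  set (aA := V q psi Sa (S t) GA) in *. set (aB := V q psi Sa (S t) GB) in *.
  set (bA := V q psi Sb (S t) GA) in *. set (bB := V q psi Sb (S t) GB) in *.
  assert (E1 : pi * (aA - bA) <= 0) by lra.
  assert (E2 : (1 - pi) * (bB - aB) <= 0) by lra.
  assert (aA - bA <= 0).
  { destruct (Rle_or_lt (aA - bA) 0); [assumption|].
    assert (0 < pi * (aA - bA)) by (apply Rmult_lt_0_compat; lra). lra. }
  assert (bB - aB <= 0).
  { destruct (Rle_or_lt (bB - aB) 0); [assumption|].
    assert (0 < (1 - pi) * (bB - aB)) by (apply Rmult_lt_0_compat; lra). lra. }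
  unfold Rgt in *. lra.
Qed.
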